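(* Let $E$ be a closed type of system $\mathcal F$ not containing the type constant $O$. If $E$ is an input type, then $E$ is an output type.
   Context: $\lambda$-terms are those of the untyped $\lambda$-calculus; $Fv(t)$ denotes the free variables of $t$; a term is normal if it contains no $\beta$-redex. Types of system $\mathcal F$ are built from type variables and type constants (atomic types on which one cannot quantify; $O$ is such a constant) with $\rightarrow$ and $\forall$; only proper types are considered (in every $\forall X A$, $X$ occurs free in $A$). A type is closed if it has no free type variable. Typing judgements $\Gamma\vdash_{\mathcal F} t:A$, with $\Gamma = x_1:A_1,\dots,x_n:A_n$, are generated by: (ax) $\Gamma \vdash x_i : A_i$; ($\rightarrow_i$) from $\Gamma, x:B \vdash t : C$ infer $\Gamma \vdash \lambda x t : B \rightarrow C$; ($\rightarrow_e$) from $\Gamma \vdash u : B\rightarrow C$ and $\Gamma \vdash v : B$ infer $\Gamma \vdash (u)v : C$; ($\forall_i$) from $\Gamma \vdash t : A$ with $X$ not free in $\Gamma$ infer $\Gamma \vdash t : \forall X A$; ($\forall_e$) from $\Gamma \vdash t : \forall X A$ infer $\Gamma \vdash t : A[C/X]$ for any type $C$. The system $\mathcal F_0$ is system $\mathcal F$ without the rule ($\forall_e$); its judgements are written $\vdash_{\mathcal F_0}$. A closed type $E$ is an input type if for every normal $\lambda$-term $t$, $\vdash_{\mathcal F} t : E$ implies $\vdash_{\mathcal F_0} t : E$. A closed type $S$ not containing $O$ is an output type if for every normal $\lambda$-term $t$ and term variable $\alpha$, $\alpha : O \vdash_{\mathcal F} t : S$ implies $\alpha\notin Fv(t)$. *)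

(* Defs.v *)
From Stdlib Require Import Arith List.
Import ListNotations.

Inductive term : Type :=
| Var : nat -> term
| Lam : nat -> term -> term
| App : term -> term -> term.

Fixpoint free_in (x : nat) (t : term) : Prop :=
  match t with
  | Var y => x = y
  | Lam y u => x <> y /\ free_in x u
  | App u v => free_in x u \/ free_in x v
  end.

Fixpoint normal (t : term) : Prop :=
  match t with
  | Var _ => True
  | Lam _ u => normal u
  | App u v =>
      (match u with Lam _ _ => False | _ => True end) /\ normal u /\ normal v
  end.

(** Types of system F: de Bruijn-indexed type variables, type constants
    (atomic, not quantifiable), arrow and universal quantification. *)
Inductive ty : Type :=
| TVar : nat -> ty
| TCst : nat -> ty
| Arr : ty -> ty -> ty
| All : ty -> ty.           (* forall X. A, X being index 0 in A *)

Definition O : ty := TCst 0.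

Fixpoint occurs_var (k : nat) (A : ty) : bool :=
  match A with
  | TVar n => Nat.eqb n k
  | TCst _ => false
  | Arr B C => occurs_var k B || occurs_var k C
  | All B => occurs_var (S k) B
  end.

Fixpoint proper (A : ty) : Prop :=
  match A with
  | TVar _ | TCst _ => True
  | Arr B C => proper B /\ proper C
  | All B => occurs_var 0 B = true /\ proper B
  end.

Fixpoint closed_at (k : nat) (A : ty) : Prop :=
  match A with
  | TVar n => n < k
  | TCst _ => True
  | Arr B C => closed_at k B /\ closed_at k C
  | All B => closed_at (S k) B
  end.

Definition closed_ty (A : ty) : Prop := closed_at 0 A.

Fixpoint contains_O (A : ty) : Prop :=
  match A with
  | TVar _ => False
  | TCst c => c = 0
  | Arr B C => contains_O B \/ contains_O C
  | All B => contains_O B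
  end.

Fixpoint shift (c : nat) (A : ty) : ty :=
  match A with
  | TVar n => if Nat.ltb n c then TVar n else TVar (S n)
  | TCst k => TCst k
  | Arr B C => Arr (shift c B) (shift c C)
  | All B => All (shift (S c) B)
  end.

Fixpoint shiftn (n : nat) (A : ty) : ty :=
  match n with 0 => A | S m => shift 0 (shiftn m A) end.

Fixpoint subst (k : nat) (C : ty) (A : ty) : ty :=
  match A with
  | TVar n =>
      if Nat.eqb n k then shiftn k C
      else if Nat.ltb k n then TVar (pred n) else TVar n
  | TCst c => TCst c
  | Arr B D => Arr (subst k C B) (subst k C D)
  | All B => All (subst (S k) C B)
  end.

(** A[C/X] where A is the body of forall X A *)
Definition inst (A C : ty) : ty := subst 0 C A.

Definition ctx := list (nat * ty).

Fixpoint lookup (G : ctx) (x : nat) : option ty :=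
  match G with
  | [] => None
  | (y, A) :: G' => if Nat.eqb x y then Some A else lookup G' x
  end.

Definition shift_ctx (G : ctx) : ctx := map (fun p => (fst p, shift 0 (snd p))) G.

(** Typing. [typ true] is system F, [typ false] is system F_0
    (F without the rule forall-elimination).
    Rule (forall_i) in de Bruijn form: typing in the shifted context
    expresses that the abstracted variable X is not free in Gamma. *)
Inductive typ (elim : bool) : ctx -> term -> ty -> Prop :=
| T_ax : forall G x A, lookup G x = Some A -> typ elim G (Var x) A
| T_arr_i : forall G x t B C,
    proper B -> typ elim ((x, B) :: G) t C -> typ elim G (Lam x t) (Arr B C)
| T_arr_e : forall G u v B C,
    typ elim G u (Arr B C) -> typ elim G v B -> typ elim G (App u v) C
| T_all_i : forall G t A,
    occurs_var 0 A = true ->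
    typ elim (shift_ctx G) t A -> typ elim G t (All A)
| T_all_e : forall G t A C,
    elim = true -> proper C ->
    typ elim G t (All A) -> typ elim G t (inst A C).

Definition typF (G : ctx) (t : term) (A : ty) : Prop := typ true G t A.
Definition typF0 (G : ctx) (t : term) (A : ty) : Prop := typ false G t A.

Definition input_type (E : ty) : Prop :=
  closed_ty E /\
  forall t, normal t -> typF [] t E -> typF0 [] t E.

Definition output_type (S : ty) : Prop :=
  closed_ty S /\ ~ contains_O S /\
  forall (t : term) (alpha : nat),
    normal t -> typF [(alpha, O)] t S -> ~ free_in alpha t.

(* Main.v *)
Require Import Defs.
From Stdlib Require Import Arith List Lia.
Import ListNotations.

Fixpoint tsubst (a : nat) (u : term) (t : term) : term :=
  match t with
  | Var y => if Nat.eqb y a then u else Var y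
  | Lam y b => if Nat.eqb y a then Lam y b else Lam y (tsubst a u b)
  | App p q => App (tsubst a u p) (tsubst a u q)
  end.

Fixpoint has_sub (u s : term) : Prop :=
  s = u \/ match s with
           | Var _ => False
           | Lam _ b => has_sub u b
           | App p q => has_sub u p \/ has_sub u q
           end.

Fixpoint tsize (A : ty) : nat :=
  match A with
  | TVar _ | TCst _ => 1
  | Arr B C => S (tsize B + tsize C)
  | All B => S (tsize B)
  end.

Lemma tsize_shift : forall A c, tsize (shift c A) = tsize A.
Proof. induction A; intros; simpl; auto. destruct (n <? c); auto. Qed.

Lemma lookup_shift_ctx : forall G x,
  lookup (shift_ctx G) x = option_map (shift 0) (lookup G x).
Proof.
  induction G as [|[y B] G IH]; intros; simpl; auto.
  destruct (x =? y); auto.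
Qed.

Lemma weaken : forall e G s A, typ e G s A -> forall G',
  (forall x, free_in x s -> lookup G x = lookup G' x) -> typ e G' s A.
Proof.
  induction 1; intros G' Hag.
  - constructor. rewrite <- Hag; simpl; auto.
  - constructor; auto. apply IHtyp. intros y Hy. simpl.
    destruct (Nat.eqb_spec y x); auto. apply Hag. simpl; auto.
  - econstructor; [apply IHtyp1 | apply IHtyp2]; intros; apply Hag; simpl; auto.
  - constructor; auto. apply IHtyp. intros y Hy.
    rewrite !lookup_shift_ctx, Hag; auto.
  - apply T_all_e; auto.
Qed.

Lemma var_O : forall e G s A, typ e G s A -> forall x, s = Var x ->
  lookup G x = Some O -> A = O.
Proof.
  induction 1; intros z Hs Hl; try discriminate.
  - injection Hs; intros; subst. congruence.
  - subst. assert (A = O).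
    { apply (IHtyp z eq_refl). rewrite lookup_shift_ctx, Hl. reflexivity. }
    subst. simpl in H. discriminate.
  - specialize (IHtyp z Hs Hl). discriminate.
Qed.

Lemma normal_tsubst : forall G t A, typ true G t A -> forall a w,
  normal w -> lookup G a = Some O -> normal t -> normal (tsubst a w t).
Proof.
  induction 1; intros a w Hu Hl Hn; simpl.
  - destruct (x =? a); simpl; auto.
  - destruct (Nat.eqb_spec x a); simpl; auto.
    apply IHtyp; auto. simpl. destruct (Nat.eqb_spec a x); auto. congruence.
  - simpl in Hn. destruct Hn as [H1 [H2 H3]]. split; [|split; auto].
    destruct u; simpl; auto.
    + destruct (Nat.eqb_spec n a); simpl; auto. subst.
      assert (Arr B C = O) by (eapply var_O; eauto). discriminate.
    + contradiction.
  - apply IHtyp; auto. rewrite lookup_shift_ctx, Hl. reflexivity.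
  - apply IHtyp; auto.
Qed.

Lemma subst_typ : forall G t A, typ true G t A -> forall a T w G',
  shift 0 T = T -> lookup G a = Some T -> typ true [] w T ->
  (forall x, free_in x w -> False) ->
  (forall x, x <> a -> lookup G x = lookup G' x) ->
  typ true G' (tsubst a w t) A.
Proof.
  induction 1; intros a T w G' HT Hla Hu Hcl Hag; simpl.
  - destruct (Nat.eqb_spec x a).
    + subst. rewrite Hla in H. injection H; intros; subst.
      apply (weaken _ _ _ _ Hu). intros y Hy; exfalso; eauto.
    + constructor. rewrite <- Hag; auto.
  - destruct (Nat.eqb_spec x a).
    + subst. apply (weaken _ G). constructor; auto.
      intros y [Hy _]. apply Hag; auto.
    + constructor; auto. apply IHtyp with T; auto.
      * simpl. destruct (Nat.eqb_spec a x); auto. congruence.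
      * intros y Hy. simpl. destruct (y =? x); auto.
  - econstructor; eauto.
  - constructor; auto. apply IHtyp with T; auto.
    + rewrite lookup_shift_ctx, Hla. simpl. rewrite HT. reflexivity.
    + intros y Hy. rewrite !lookup_shift_ctx, Hag; auto.
  - apply T_all_e; eauto.
Qed.

Lemma var_size : forall G s D, typ false G s D -> forall z L, s = Var z ->
  lookup G z = Some L -> tsize L <= tsize D.
Proof.
  induction 1; intros z L Hs Hl; try discriminate.
  - injection Hs; intros; subst. rewrite Hl in H. injection H; intros; subst. lia.
  - simpl. assert (tsize (shift 0 L) <= tsize A).
    { apply (IHtyp z); auto. rewrite lookup_shift_ctx, Hl. reflexivity. }
    rewrite tsize_shift in H1. lia.
Qed.

Lemma var_arr : forall G s D, typ false G s D -> forall z B C, s = Var z ->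
  D = Arr B C -> lookup G z = Some D.
Proof.
  induction 1; intros z B' C' Hs HD; try discriminate.
  injection Hs; intros; subst. auto.
Qed.

Lemma app_self : forall G s C, typ false G s C -> forall z,
  s = App (Var z) (Var z) -> False.
Proof.
  induction 1; intros z Hs; try discriminate.
  - injection Hs; intros; subst.
    assert (Hl : lookup G z = Some (Arr B C)) by (eapply var_arr; eauto).
    pose proof (var_size _ _ _ H0 z _ eq_refl Hl). simpl in H1. lia.
  - eauto.
Qed.

Definition uu := Lam 0 (App (Var 0) (Var 0)).

Lemma no_sub : forall G s A, typ false G s A -> has_sub uu s -> False.
Proof.
  induction 1; intros Hs; simpl in Hs; try discriminate.
  - destruct Hs as [Hs|Hs]; [discriminate|contradiction].
  - destruct Hs as [Hs|Hs]; auto. unfold uu in Hs. injection Hs; intros; subst.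
    eapply app_self; eauto.
  - destruct Hs as [Hs|[Hs|Hs]]; auto. discriminate.
  - auto.
Qed.

Lemma sub_tsubst : forall a u t, free_in a t -> has_sub u (tsubst a u t).
Proof.
  induction t; simpl; intros Hf.
  - subst. rewrite Nat.eqb_refl. destruct u; simpl; auto.
  - destruct Hf as [Hne Hf]. destruct (Nat.eqb_spec n a); [congruence|].
    simpl. right. auto.
  - simpl. right. destruct Hf; auto.
Qed.

Definition Bot := All (TVar 0).
Definition Tz := Arr Bot Bot.

Fixpoint csub (A : ty) : ty :=
  match A with
  | TVar n => TVar n
  | TCst c => if Nat.eqb c 0 then Tz else TCst c
  | Arr B C => Arr (csub B) (csub C)
  | All B => All (csub B)
  end.

Lemma occurs_csub : forall A k, occurs_var k (csub A) = occurs_var k A.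
Proof.
  induction A; intros; simpl; auto.
  - destruct (n =? 0); reflexivity.
  - rewrite IHA1, IHA2; auto.
Qed.

Lemma proper_csub : forall A, proper A -> proper (csub A).
Proof.
  induction A; simpl; intros; auto.
  - destruct (n =? 0); simpl; auto.
  - tauto.
  - rewrite occurs_csub; tauto.
Qed.

Lemma shift_csub : forall A c, csub (shift c A) = shift c (csub A).
Proof.
  induction A; intros; simpl; auto.
  - destruct (n <? c); reflexivity.
  - destruct (n =? 0); reflexivity.
  - rewrite IHA1, IHA2; auto.
  - rewrite IHA; auto.
Qed.

Lemma shiftn_csub : forall n A, csub (shiftn n A) = shiftn n (csub A).
Proof. induction n; intros; simpl; auto. rewrite shift_csub, IHn; auto. Qed.

Lemma subst_csub : forall A k C, csub (subst k C A) = subst k (csub C) (csub A).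
Proof.
  induction A; intros; simpl; auto.
  - destruct (n =? k). apply shiftn_csub. destruct (k <? n); reflexivity.
  - destruct (n =? 0); reflexivity.
  - rewrite IHA1, IHA2; auto.
  - rewrite IHA; auto.
Qed.

Definition cmap (G : ctx) : ctx := map (fun p => (fst p, csub (snd p))) G.

Lemma lookup_cmap : forall G x, lookup (cmap G) x = option_map csub (lookup G x).
Proof.
  induction G as [|[y B] G IH]; intros; simpl; auto. destruct (x =? y); auto.
Qed.

Lemma shift_ctx_cmap : forall G, shift_ctx (cmap G) = cmap (shift_ctx G).
Proof.
  induction G as [|[y B] G IH]; simpl; auto. rewrite IH, shift_csub; auto.
Qed.

Lemma csub_typ : forall G t A, typ true G t A -> typ true (cmap G) t (csub A).
Proof.
  induction 1; simpl.
  - constructor. rewrite lookup_cmap, H. reflexivity.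
  - constructor; auto. apply proper_csub; auto.
  - econstructor; eauto.
  - constructor. rewrite occurs_csub; auto. rewrite shift_ctx_cmap; auto.
  - unfold inst. rewrite subst_csub. apply T_all_e; auto. apply proper_csub; auto.
Qed.

Lemma noO : forall A, ~ contains_O A -> csub A = A.
Proof.
  induction A; simpl; intros H; auto.
  - destruct (Nat.eqb_spec n 0); [contradiction|auto].
  - rewrite IHA1, IHA2; tauto.
  - rewrite IHA; auto.
Qed.

Theorem theorem2p2p8 (E : ty) :
  proper E -> closed_ty E -> ~ contains_O E ->
  input_type E -> output_type E.
Proof.
  intros HP HC HO [HCE Hin]. split; [auto|split; [auto|]].
  intros t a Hn Ht Hfree.
  assert (Hu : typ true [] uu Tz).
  { unfold uu, Tz, Bot. apply T_arr_i. simpl; auto.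
    apply T_arr_e with (B := All (TVar 0)).
    - change (Arr (All (TVar 0)) (All (TVar 0)))
        with (inst (TVar 0) (Arr (All (TVar 0)) (All (TVar 0)))).
      apply T_all_e; auto. simpl; auto. constructor; reflexivity.
    - constructor; reflexivity. }
  assert (Ht' : typ true [(a, Tz)] t E).
  { pose proof (csub_typ _ _ _ Ht) as H. rewrite noO in H; auto. }
  assert (Hs : typ true [] (tsubst a uu t) E).
  { apply subst_typ with [(a, Tz)] Tz; auto.
    - simpl. rewrite Nat.eqb_refl. reflexivity.
    - intros x Hx. simpl in Hx. destruct Hx as [Hx Hx']. subst. simpl in Hx'. lia.
    - intros x Hx. simpl. destruct (Nat.eqb_spec x a); [congruence|auto]. }
  assert (Hnorm : normal (tsubst a uu t)).
  { apply normal_tsubst with [(a, O)] E; auto.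
    - simpl. split; auto.
    - simpl. rewrite Nat.eqb_refl. reflexivity. }
  pose proof (Hin _ Hnorm Hs) as H0.
  apply (no_sub _ _ _ H0). apply sub_tsubst; auto.
Qed.
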